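(* Let $q$ be a prime power, $n\ge1$, and let $M$ be chosen uniformly at random from $\mathrm{GL}(n,\mathbb{F}_q)$. Then for every integer $0\le h<n-1$ and every monic $f\in\mathbb{F}_q[T]$ of degree $n$, $$\left|\mathbb{P}_{M\in\mathrm{GL}(n,\mathbb{F}_q)}\big(\det(T-M)\in I(f;h)\big)-\frac{q^{h+1}}{q^n}\right|\le\frac{n-h}{q^n}.$$
   Context: For a monic polynomial $f\in\mathbb{F}_q[T]$ of degree $n$ and $0\le h\le n-1$, $I(f;h)=\{g\in\mathbb{F}_q[T] \text{ monic}: \deg(f-g)\le h\}$ (with $\deg 0=-\infty$). $\det(T-M)$ is the characteristic polynomial of $M$. *)

(* Defs.v *)
From HB Require Import structures.
From mathcomp Require Import all_boot all_order all_algebra.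
Set Implicit Arguments. Unset Strict Implicit. Unset Printing Implicit Defensive.
Import Order.TTheory GRing.Theory Num.Theory.
Local Open Scope ring_scope.

(* I(f;h) = { g monic : deg (f - g) <= h }, deg 0 = -oo.
   Since size p = deg p + 1 (and size 0 = 0), deg (f-g) <= h  <->  size (f-g) <= h+1. *)
Definition Iset (F : fieldType) (f : {poly F}) (h : nat) : pred {poly F} :=
  fun g => (g \is monic) && (size (f - g)%R <= h.+1)%N.

Definition prob_charpoly_in_I (F : finFieldType) (n : nat) (f : {poly F}) (h : nat) : rat :=
  (#|[set M : 'M[F]_n | (M \in unitmx) && Iset f h (char_poly M)]|%:R
   / #|[set M : 'M[F]_n | M \in unitmx]|%:R).

(* Main.v *)
Require Import Defs.
From HB Require Import structures.
From mathcomp Require Import all_boot all_order all_algebra.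
From mathcomp Require Import zify ring lra.
Set Implicit Arguments. Unset Strict Implicit. Unset Printing Implicit Defensive.
Import Order.TTheory GRing.Theory Num.Theory.
Local Open Scope ring_scope.
Section Krylov.
Variable F : fieldType.

Definition kry n (M : 'M[F]_n) (v : 'rV[F]_n) j : 'M[F]_(j, n) :=
  \matrix_(i < j) (v *m M ^+ i).

Definition cls n d (M : 'M[F]_n) (v : 'rV[F]_n) :=
  row_free (kry M v d) && (v *m M ^+ d <= kry M v d)%MS.

Lemma rowkry n (M : 'M[F]_n) v j (i : 'I_j) : row i (kry M v j) = v *m M ^+ i.
Proof. by rewrite rowK. Qed.

Lemma kry_stable n d (M : 'M[F]_n) v : cls d M v -> (kry M v d *m M <= kry M v d)%MS.
Proof.
case/andP=> _ hd; apply/row_subP => i; rewrite row_mul rowkry -mulmxA mulmxE -exprSr.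
case: (ltnP i.+1 d) => hi.
  by rewrite -(rowkry M v (Ordinal hi)) row_sub.
have -> : i.+1 = d by apply/eqP; rewrite eqn_leq hi ltn_ord.
exact: hd.
Qed.

Lemma kry_inv n d (M : 'M[F]_n) v j : cls d M v -> (v *m M ^+ j <= kry M v d)%MS.
Proof.
move=> hc; elim: j => [|j IH].
  case: d hc => [|d] hc; first by case/andP: hc.
  by rewrite -(rowkry M v (@ord0 d)) row_sub.
rewrite exprSr -mulmxE mulmxA; apply: submx_trans (kry_stable hc).
exact: submxMr.
Qed.

Lemma cls_uniq n d d' (M : 'M[F]_n) v : cls d M v -> cls d' M v -> d = d'.
Proof.
wlog lt: d d' / (d <= d')%N.
  move=> W h1 h2; case: (leqP d d') => l; first exact: W.
  by apply/esym/W => //; apply: ltnW.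
move=> h1 h2; apply/eqP; rewrite eqn_leq lt /=.
have sub : (kry M v d' <= kry M v d)%MS.
  by apply/row_subP => i; rewrite rowkry; apply: kry_inv.
move: (mxrankS sub); case/andP: h1 => /eqP -> _; case/andP: h2 => /eqP -> _.
done.
Qed.

Lemma rank_adds_rV n m (A : 'M[F]_(m, n)) (u : 'rV[F]_n) :
  ~~ (u <= A)%MS -> \rank (A + u)%MS = (\rank A).+1.
Proof.
move=> nu; have u0 : u != 0 by apply: contraNneq nu => ->; rewrite sub0mx.
have := mxrank_sum_cap A u; rewrite rank_rV u0 addn1.
suff -> : \rank (A :&: u)%MS = 0%N by rewrite addn0.
apply/eqP; rewrite -leqn0 -ltnS.
have := mxrank_leqif_sup (capmxSr A u); rewrite rank_rV u0 => H.
rewrite (ltn_leqif H); apply: contra nu => su.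
exact: submx_trans su (capmxSl _ _).
Qed.

Lemma kry_S n (M : 'M[F]_n) v j :
  (kry M v j.+1 :=: kry M v j + v *m M ^+ j)%MS.
Proof.
apply/eqmxP/andP; split.
  apply/row_subP => i; rewrite rowkry.
  case: (ltnP i j) => hi.
    by apply: submx_trans (addsmxSl _ _); rewrite -(rowkry M v (Ordinal hi)) row_sub.
  have -> : nat_of_ord i = j by apply/eqP; rewrite eqn_leq hi -ltnS ltn_ord.
  exact: addsmxSr.
rewrite addsmx_sub; apply/andP; split.
  apply/row_subP => i; rewrite rowkry.
  by rewrite -(rowkry M v (widen_ord (leqnSn j) i)) row_sub.
by rewrite -(rowkry M v (@ord_max j)) row_sub.
Qed.

Lemma cls_exists n (M : 'M[F]_n) v : exists2 d, (d <= n)%N & cls d M v.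
Proof.
pose P j := row_free (kry M v j).
have P0 : exists j, P j by exists 0%N; rewrite /P /row_free -leqn0 rank_leq_row.
have Pb : forall j, P j -> (j <= n)%N.
  move=> j; rewrite /P /row_free => /eqP <-; exact: rank_leq_col.
case: (ex_maxnP P0 Pb) => d Pd maxd.
exists d; first exact: Pb.
apply/andP; split => //; apply/negPn/negP => nsub.
have : P d.+1.
  rewrite /P /row_free (eqmx_rank (introT eqmxP (kry_S M v d))) rank_adds_rV //.
by move/maxd; rewrite ltnn.
Qed.

Lemma cls0 n (M : 'M[F]_n) v : cls 0 M v = (v == 0).
Proof.
rewrite /cls /row_free -leqn0 rank_leq_row /= expr0 mulmx1.
have -> : kry M v 0 = 0 by apply: flatmx0.
apply/idP/eqP => [/submx0null //|->]; exact: sub0mx.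
Qed.

Lemma cls_sum n (M : 'M[F]_n) v :
  (\sum_(d < n.+1) (cls d M v : nat))%N = 1%N.
Proof.
have [d dn hd] := cls_exists M v.
rewrite (bigD1 (Ordinal (dn : d < n.+1)%N)) //= hd big1 // => i /eqP ne.
case hi: (cls i M v) => //; exfalso; apply: ne; apply: val_inj => /=.
exact: cls_uniq hi hd.
Qed.

End Krylov.
Section CP.
Variable F : fieldType.

Lemma char_poly_conj n (P A : 'M[F]_n) : P \in unitmx ->
  char_poly (invmx P *m A *m P) = char_poly A.
Proof.
move=> uP; rewrite /char_poly.
have e1 : map_mx (@polyC F) (invmx P) *m map_mx (@polyC F) P = 1%:M.
  by rewrite -map_mxM mulVmx // map_mx1.
have -> : char_poly_mx (invmx P *m A *m P) =
   map_mx (@polyC F) (invmx P) *m char_poly_mx A *m map_mx (@polyC F) P.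
  rewrite /char_poly_mx mulmxBr mulmxBl !map_mxM; congr (_ - _).
  by rewrite scalar_mxC -mulmxA e1 mulmx1.
rewrite !det_mulmx mulrC mulrA -det_mulmx.
by rewrite -map_mxM mulmxV // map_mx1 det1 mul1r.
Qed.

Lemma char_poly_lblock n1 n2 (A : 'M[F]_n1) (X : 'M[F]_(n2, n1)) (B : 'M[F]_n2) :
  char_poly (block_mx A 0 X B) = char_poly A * char_poly B.
Proof.
rewrite /char_poly /char_poly_mx map_block_mx scalar_mx_block opp_block_mx.
by rewrite add_block_mx map_mx0 oppr0 addr0 det_lblock.
Qed.

Lemma char_poly_cast n1 n2 (e : n1 = n2) (A : 'M[F]_n1) :
  char_poly (castmx (e, e) A) = char_poly A.
Proof. by case: n2 / e; rewrite castmx_id. Qed.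

Definition Ca d' (a : 'rV[F]_d'.+1) : 'M[F]_d'.+1 :=
  \matrix_(i, j) if (i == d' :> nat) then a 0 j else (i.+1 == j :> nat)%:R.

Definition ga d' (a : 'rV[F]_d'.+1) : {poly F} := 'X^(d'.+1) - \poly_(i < d'.+1) a 0 (inord i).

Lemma size_ga d' (a : 'rV[F]_d'.+1) : size (ga a) = d'.+2.
Proof.
rewrite /ga size_polyDl ?size_polyXn // size_polyN ltnS.
exact: size_poly.
Qed.

Lemma ga_monic d' (a : 'rV[F]_d'.+1) : ga a \is monic.
Proof.
rewrite /ga monicE lead_coefDl ?lead_coefXn // size_polyN size_polyXn ltnS.
exact: size_poly.
Qed.

Lemma char_poly_Ca d' (a : 'rV[F]_d'.+1) : char_poly (Ca a) = ga a.
Proof.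
have e : (size (ga a)).-1 = d'.+1 by rewrite size_ga.
rewrite -[RHS](companionmxK (ga_monic a)) -(char_poly_cast e).
congr char_poly; apply/matrixP => i j.
rewrite castmxE !mxE /= e /=.
case: ifP => // _.
rewrite /ga coefB coefXn coef_poly ltn_eqF // ltn_ord sub0r opprK.
by rewrite inord_val.
Qed.

End CP.

Section Bij.
Variable F : finFieldType.
Variables d' m : nat.
Local Notation d := d'.+1.
Local Notation n := (d'.+1 + m)%N.

Definition compl (K : 'M[F]_(d, n)) : 'M[F]_(m, n) :=
  odflt 0 [pick C : 'M[F]_(m, n) | col_mx K C \in unitmx].
Definition PK (K : 'M[F]_(d, n)) : 'M[F]_n := col_mx K (compl K).

Lemma compl_ex (K : 'M[F]_(d, n)) : row_free K ->
  exists C : 'M[F]_(m, n), col_mx K C \in unitmx.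
Proof.
move=> rf.
have rk : \rank (K^C)%MS = m by rewrite mxrank_compl (eqP rf) addKn.
exists (castmx (rk, erefl) (row_base (K^C)%MS)).
rewrite -row_full_unit /row_full.
have H : (col_mx K (castmx (rk, erefl) (row_base (K^C)%MS)) == K + K^C)%MS.
  apply/eqmxP; apply: eqmx_trans (eqmx_sym (addsmxE _ _)) _.
  apply: adds_eqmx => //; apply: eqmx_trans (eqmx_cast _ _) _.
  exact: eq_row_base.
by rewrite (eqmx_rank H); exact: addsmx_compl_full.
Qed.

Lemma PK_unit K : row_free K -> PK K \in unitmx.
Proof.
move=> rf; rewrite /PK /compl; case: pickP => [C //|none].
by case: (compl_ex rf) => C hC; rewrite none in hC.
Qed.

Lemma K_PK K : row_free K -> K *m invmx (PK K) = row_mx 1%:M 0.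
Proof.
move=> rf; have e : row_mx 1%:M 0 *m PK K = K.
  by rewrite /PK mul_row_col mul1mx mul0mx addr0.
by rewrite -{1}e mulmxK // PK_unit.
Qed.

Lemma conj_block K (M : 'M[F]_n) a : row_free K -> K *m M = Ca a *m K ->
  PK K *m M *m invmx (PK K) =
  block_mx (Ca a) 0 (dlsubmx (PK K *m M *m invmx (PK K)))
                    (drsubmx (PK K *m M *m invmx (PK K))).
Proof.
move=> rf KM; set N := PK K *m M *m invmx (PK K).
have uN : usubmx N = row_mx (Ca a) 0.
  rewrite /N -!mul_usub_mx /PK col_mxKu KM -mulmxA -/(PK K) K_PK //.
  by rewrite mul_mx_row mulmx1 mulmx0.
rewrite -[N in LHS]submxK; congr block_mx.
  by rewrite /ulsubmx uN row_mxKl.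
by rewrite /ursubmx uN row_mxKr.
Qed.

Definition Nm (a : 'rV[F]_d) (X : 'M[F]_(m, d)) (B : 'M[F]_m) : 'M[F]_n :=
  block_mx (Ca a) 0 X B.

Definition bwd (t : ('M[F]_(d, n) * 'rV[F]_d) * ('M[F]_(m, d) * 'M[F]_m)) :
   'M[F]_n * 'rV[F]_n :=
  (invmx (PK t.1.1) *m Nm t.1.2 t.2.1 t.2.2 *m PK t.1.1, row 0 t.1.1).

Definition fwd (p : 'M[F]_n * 'rV[F]_n) :
   ('M[F]_(d, n) * 'rV[F]_d) * ('M[F]_(m, d) * 'M[F]_m) :=
  let K := kry p.1 p.2 d in
  let N := PK K *m p.1 *m invmx (PK K) in
  ((K, p.2 *m p.1 ^+ d *m pinvmx K), (dlsubmx N, drsubmx N)).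

Lemma rowCa_lt a (i : 'I_d) (K : 'M[F]_(d, n)) : (i < d')%N ->
  row i (Ca a) *m K = row (inord i.+1) K.
Proof.
move=> lt; rewrite (rowE (inord i.+1)); congr (_ *m _).
apply/rowP => j; rewrite !mxE (ltn_eqF lt) /=.
by rewrite -val_eqE /= inordK // eq_sym.
Qed.

Lemma rowCa_max a (K : 'M[F]_(d, n)) : row ord_max (Ca a) *m K = a *m K.
Proof.
congr (_ *m _); apply/rowP => j; rewrite !mxE /= eqxx.
by congr (a _ _); apply: val_inj.
Qed.

Lemma KM_bwd t : row_free t.1.1 -> t.1.1 *m (bwd t).1 = Ca t.1.2 *m t.1.1.
Proof.
case: t => [[K a] [X B]] /= rf.
have e : K = usubmx (PK K) by rewrite /PK col_mxKu.
rewrite {1}e mul_usub_mx !mulmxA mulmxV ?PK_unit // mul1mx -mul_usub_mx.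
by rewrite /Nm block_mxEv col_mxKu /PK mul_row_col mul0mx addr0.
Qed.

Lemma krylov_of (M : 'M[F]_n) (K : 'M[F]_(d, n)) a :
  K *m M = Ca a *m K ->
  (forall i : 'I_d, row 0 K *m M ^+ i = row i K) /\
  row 0 K *m M ^+ d = a *m K.
Proof.
move=> KM.
have H : forall i, (i < d)%N -> row 0 K *m M ^+ i = row (inord i) K.
  elim=> [|i IH] lt; first by rewrite expr0 mulmx1; congr row; apply: val_inj; rewrite /= inordK.
  rewrite exprSr -mulmxE mulmxA IH 1?ltnW // -row_mul KM row_mul.
  by rewrite rowCa_lt ?inordK // ltnW.
split; first by move=> i; rewrite H // inord_val.
rewrite exprSr -mulmxE mulmxA H // -row_mul KM row_mul.
have -> : (inord d' : 'I_d) = ord_max by apply: val_inj; rewrite /= inordK.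
exact: rowCa_max.
Qed.

Lemma fwd_bwd t : row_free t.1.1 -> fwd (bwd t) = t.
Proof.
move=> rf; have KM := KM_bwd rf; move: rf KM.
case: t => [[K a] [X B]] /= rf KM.
have [H1 H2] := krylov_of KM.
have eK : kry (invmx (PK K) *m Nm a X B *m PK K) (row 0 K) d = K.
  by apply/row_matrixP => i; rewrite rowK H1.
rewrite /fwd /= eK H2 mulmxKp //.
have eN : PK K *m (invmx (PK K) *m Nm a X B *m PK K) *m invmx (PK K) = Nm a X B.
  by rewrite !mulmxA mulmxV ?PK_unit // mul1mx mulmxK ?PK_unit.
by rewrite eN /Nm block_mxKdl block_mxKdr.
Qed.

Lemma KM_cls (M : 'M[F]_n) v : cls d M v ->
  kry M v d *m M = Ca (v *m M ^+ d *m pinvmx (kry M v d)) *m kry M v d.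
Proof.
case/andP=> rf sub; apply/row_matrixP => i.
rewrite row_mul rowK -mulmxA mulmxE -exprSr row_mul.
case: (ltnP i d') => lt.
  by rewrite rowCa_lt // rowK inordK.
have -> : i = ord_max by apply: val_inj; apply/eqP; rewrite eqn_leq lt -ltnS ltn_ord.
by rewrite rowCa_max mulmxKpV.
Qed.

Lemma bwd_fwd p : cls d p.1 p.2 -> bwd (fwd p) = p.
Proof.
case: p => M v /= hc; have rf : row_free (kry M v d) by case/andP: hc.
have KM := KM_cls hc.
rewrite /bwd /fwd /=; congr pair.
  rewrite /Nm -(conj_block rf KM) !mulmxA mulVmx ?PK_unit // mul1mx.
  by rewrite mulmxKV ?PK_unit.
by rewrite rowK expr0 mulmx1.
Qed.

Lemma cls_bwd t : row_free t.1.1 -> cls d (bwd t).1 (bwd t).2.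
Proof.
move=> rf; have KM := KM_bwd rf; move: rf KM.
case: t => [[K a] [X B]] /= rf KM.
have [H1 H2] := krylov_of KM.
have eK : kry (invmx (PK K) *m Nm a X B *m PK K) (row 0 K) d = K.
  by apply/row_matrixP => i; rewrite rowK H1.
by rewrite /cls eK rf H2 submxMl.
Qed.

Lemma char_poly_bwd t : row_free t.1.1 ->
  char_poly (bwd t).1 = ga t.1.2 * char_poly t.2.2.
Proof.
case: t => [[K a] [X B]] /= rf.
by rewrite char_poly_conj ?PK_unit // char_poly_lblock char_poly_Ca.
Qed.

End Bij.
Lemma sum_const_full (T : finType) (c : nat) : (\sum_(x : T) c)%N = (#|T| * c)%N.
Proof. by rewrite sum_nat_const. Qed.

Lemma sum4 (T1 T2 T3 T4 : finType) (P : pred T1) (G : T2 -> T4 -> nat) :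
  (\sum_(t : (T1 * T2) * (T3 * T4)) (P t.1.1 * G t.1.2 t.2.2))%N
   = (#|P| * #|T3| * \sum_(ab : T2 * T4) G ab.1 ab.2)%N.
Proof.
rewrite -(pair_bigA _ (fun (x : T1 * T2) (y : T3 * T4) => P x.1 * G x.2 y.2)%N) /=.
rewrite -(pair_bigA _ (fun (x : T1) (y : T2) => \sum_(j : T3 * T4) P x * G y j.2)%N) /=.
rewrite -(pair_bigA _ (fun (x : T2) (y : T4) => G x y)) /=.
transitivity (\sum_i \sum_j (P i * (#|T3| * \sum_b G j b)))%N.
  apply: eq_bigr => i _; apply: eq_bigr => j _.
  rewrite -(pair_bigA _ (fun (x : T3) (y : T4) => P i * G j y)%N) /=.
  under eq_bigr => x _ do rewrite -big_distrr /=.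
  by rewrite sum_const_full mulnCA.
under eq_bigr => i _ do rewrite -big_distrr /=.
rewrite -big_distrl /=.
have -> : (\sum_i (P i : nat) = #|P|)%N.
  by rewrite -sum1_card [RHS]big_mkcond; apply: eq_bigr => i _; rewrite unfold_in; case: (P i).
by rewrite -big_distrr /= mulnA.
Qed.

Section Count.
Variable F : finFieldType.
Variables d' m : nat.
Local Notation d := d'.+1.
Local Notation n := (d'.+1 + m)%N.

Lemma cnt_bij (Q : pred {poly F}) :
  (\sum_(p : 'M[F]_n * 'rV[F]_n | cls d p.1 p.2 && Q (char_poly p.1)) 1)%N
  = (#|[set K : 'M[F]_(d, n) | row_free K]| * #|'M[F]_(m, d)|
      * \sum_(ab : 'rV[F]_d * 'M[F]_m) Q (ga ab.1 * char_poly ab.2)%R)%N.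
Proof.
set A := [set t : ('M[F]_(d, n) * 'rV[F]_d) * ('M[F]_(m, d) * 'M[F]_m) | row_free t.1.1].
have inj : {in A &, injective (@bwd F d' m)}.
  move=> t1 t2; rewrite !inE => r1 r2 e.
  by rewrite -(fwd_bwd r1) -(fwd_bwd r2) e.
have img : [set p | cls d p.1 p.2] = (@bwd F d' m) @: A.
  apply/setP => p; rewrite inE; apply/idP/imsetP.
    move=> hc; exists (fwd p); last by rewrite bwd_fwd.
    by rewrite inE /=; case/andP: hc.
  by case=> t; rewrite inE => rf ->; apply: cls_bwd.
rewrite -big_filter.
transitivity (\sum_(p in [set p : 'M[F]_n * 'rV[F]_n | cls d p.1 p.2]) (Q (char_poly p.1) : nat))%N.
  rewrite big_filter big_mkcond [RHS]big_mkcond; apply: eq_bigr => p _.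
  by rewrite inE; case: (cls _ _ _); case: (Q _).
rewrite img big_imset //=.
transitivity (\sum_(t : ('M[F]_(d, n) * 'rV[F]_d) * ('M[F]_(m, d) * 'M[F]_m)) ((row_free t.1.1 : nat) * Q (ga t.1.2 * char_poly t.2.2)%R))%N.
  rewrite big_mkcond; apply: eq_bigr => t _; rewrite inE.
  by case rf: (row_free _) => //; rewrite mul1n char_poly_bwd.
rewrite (@sum4 _ _ _ _ (fun K : 'M[F]_(d, n) => row_free K) (fun a B => (Q (ga a * char_poly B) : nat))).
by rewrite cardsE.
Qed.


Lemma sum_card (T : finType) (P : pred T) : (\sum_(x : T) (P x : nat))%N = #|P|.
Proof.
by rewrite -sum1_card [RHS]big_mkcond; apply: eq_bigr => i _; rewrite unfold_in; case: (P i).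
Qed.

Lemma unit_block K (X : 'M[F]_(m, d)) (B : 'M[F]_m) : row_free K ->
  (col_mx K (row_mx X B *m PK K) \in unitmx) = (B \in unitmx).
Proof.
move=> rf.
have -> : col_mx K (row_mx X B *m PK K) = block_mx 1%:M 0 X B *m PK K.
  rewrite block_mxEv mul_col_mx; congr col_mx.
  by rewrite /PK mul_row_col mul1mx mul0mx addr0.
rewrite unitmx_mul PK_unit // andbT !unitmxE det_lblock det1 mul1r.
by [].
Qed.

Lemma rf_col K (Y : 'M[F]_(m, n)) : col_mx K Y \in unitmx -> row_free K.
Proof.
rewrite -row_free_unit => rf; apply/inj_row_free => w wK.
have : row_mx w 0 *m col_mx K Y = 0 by rewrite mul_row_col wK mul0mx addr0.
move/eqP; rewrite mulmx_free_eq0 // => /eqP e.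
by rewrite -(row_mxKl w (0 : 'M[F]_(1, m))) e; apply/matrixP => i j; rewrite !mxE.
Qed.

Lemma cardGL_split :
  #|[set P : 'M[F]_n | P \in unitmx]| =
  (#|[set K : 'M[F]_(d, n) | row_free K]| * #|'M[F]_(m, d)|
     * #|[set B : 'M[F]_m | B \in unitmx]|)%N.
Proof.
rewrite cardsE -sum_card.
rewrite (reindex (fun KY : 'M[F]_(d, n) * 'M[F]_(m, n) => col_mx KY.1 KY.2)) /=; last first.
  apply: onW_bij; exists (fun P => (usubmx P, dsubmx P)) => [[K Y]|P] /=.
    by rewrite col_mxKu col_mxKd.
  by rewrite vsubmxK.
rewrite -(pair_bigA _ (fun K Y => (col_mx K Y \in unitmx : nat))) /=.
transitivity (\sum_(K : 'M[F]_(d, n)) ((row_free K : nat) *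
    (#|'M[F]_(m, d)| * #|[set B : 'M[F]_m | B \in unitmx]|)))%N; last first.
  rewrite -big_distrl /=. rewrite (sum_card (fun K : 'M[F]_(d, n) => row_free K)). by rewrite mulnA; congr (_ * _ * _)%N; apply: eq_card => K; rewrite inE.
apply: eq_bigr => K _; case rf: (row_free K); last first.
  by rewrite mul0n big1 // => Y _; case u: (_ \in unitmx) => //; rewrite (rf_col u) in rf.
rewrite mul1n (reindex (fun XB : 'M[F]_(m, d) * 'M[F]_m => row_mx XB.1 XB.2 *m PK K)) /=;
  last first.
  apply: onW_bij; exists (fun Y => (lsubmx (Y *m invmx (PK K)), rsubmx (Y *m invmx (PK K)))).
    by move=> [X B] /=; rewrite mulmxK ?PK_unit // row_mxKl row_mxKr.
  by move=> Y /=; rewrite hsubmxK mulmxKV ?PK_unit.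
under eq_bigr => XB _ do rewrite unit_block //.
rewrite -(pair_bigA _ (fun (X : 'M[F]_(m, d)) (B : 'M[F]_m) => (B \in unitmx : nat))) /=.
by rewrite sum_const_full sum_card cardsE.
Qed.

End Count.
Lemma prod_bool (T : finType) (b : T -> bool) :
  (\prod_(i : T) (b i : nat))%N = [forall i, b i].
Proof.
case: forallP => [all|nall].
  by rewrite big1 // => i _; rewrite all.
have [i ni] : exists i, ~~ b i.
  by apply/existsP; rewrite -negb_forall; apply/forallP.
by rewrite (bigD1 i) //= (negPf ni) mul0n.
Qed.

Lemma prod_pow (k d : nat) (q : nat) : (k <= d)%N ->
  (\prod_(i < d) (if (k <= i)%N then 1 else q))%N = (q ^ k)%N.
Proof.
move=> kd; rewrite -(big_mkord xpredT (fun i => if (k <= i)%N then 1%N else q)).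
rewrite (big_cat_nat (leq0n k) kd) /=.
rewrite [X in (_ * X)%N]big1_seq ?muln1; last first.
  by move=> i /andP[_]; rewrite mem_index_iota => /andP[-> _].
rewrite -(subn0 k) -(prod_nat_const_nat 0 k q) subn0; apply: eq_big_seq => i.
by rewrite mem_index_iota => /andP[_ lt]; rewrite leqNgt lt.
Qed.

Lemma count_rows (F : finFieldType) d' (j : nat) (c : 'I_d'.+1 -> F) :
  (1 <= j <= d'.+1)%N ->
  #|[set a : 'rV[F]_d'.+1 | (a 0 0 != 0) &&
      [forall i : 'I_d'.+1, (j <= i)%N ==> (a 0 i == c i)]]|
  = ((#|F| - 1) * #|F| ^ j.-1)%N.
Proof.
move=> /andP[j1 jd].
pose S (i : 'I_d'.+1) (x : F) : bool :=
  if i == ord0 then x != 0 else (j <= i)%N ==> (x == c i).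
rewrite cardsE -sum_card.
rewrite (reindex (fun g : {ffun 'I_d'.+1 -> F} => \row_i g i)) /=; last first.
  apply: onW_bij; exists (fun a : 'rV[F]_d'.+1 => [ffun i => a 0 i]).
    by move=> g; apply/ffunP => i; rewrite ffunE mxE.
  by move=> a; apply/rowP => i; rewrite mxE ffunE.
transitivity (\sum_(g : {ffun 'I_d'.+1 -> F}) \prod_(i : 'I_d'.+1) (S i (g i) : nat))%N.
  apply: eq_bigr => g _; rewrite prod_bool; congr nat_of_bool.
  rewrite mxE; apply/andP/forallP.
    move=> [nz /forallP al] i; rewrite /S; case: eqP => [->|_] //.
    by have := al i; rewrite mxE.
  move=> al; split; first by have := al ord0; rewrite /S eqxx.
  apply/forallP => i; rewrite mxE; have := al i; rewrite /S.
  case: eqP => [-> _|//]; apply/implyP => /= h; move: j1; rewrite leqNgt.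
  by move: h; rewrite leqn0 => /eqP ->.
rewrite -(bigA_distr_bigA (fun i x => (S i x : nat))) /=.
under eq_bigr => i _ do rewrite sum_card.
rewrite big_ord_recl /=.
have -> : #|S ord0| = (#|F| - 1)%N.
  rewrite subn1 -(cardC1 (0 : F)); apply: eq_card => x.
  by rewrite unfold_in.
congr (_ * _)%N.
rewrite -(prod_pow #|F| (_ : j.-1 <= d')%N); last by rewrite -ltnS prednK.
apply: eq_bigr => i _.
rewrite /S /=.
rewrite /bump /= add1n.
have -> : (j <= i.+1)%N = (j.-1 <= i)%N by case: (j) j1.
case: leqP => _.
  by rewrite (@eq_card1 _ (c (lift ord0 i))) // => x; rewrite unfold_in /= eq_sym.
by rewrite (@eq_card _ _ predT) ?cardE ?cardT //= => x; rewrite unfold_in.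
Qed.

Section PolyCount.
Variable F : finFieldType.
Variables (d' m h : nat) (f : {poly F}).
Local Notation d := d'.+1.
Local Notation n := (d'.+1 + m)%N.
Definition Qx (p : {poly F}) : bool := (p`_0 != 0) && Iset f h p.

Lemma coef0_ga (a : 'rV[F]_d) : (ga a)`_0 = - a 0 0.
Proof.
rewrite /ga coefB coefXn coef_poly /= sub0r; congr (- a 0 _).
by apply: val_inj; rewrite /= inordK.
Qed.

Lemma Qx_low (hB : {poly F}) : hB \is monic -> size hB = m.+1 -> (h < m)%N ->
  (#|[set a : 'rV[F]_d | Qx (ga a * hB)]| <= 1)%N.
Proof.
move=> mon sz hm; apply/card_le1_eqP => a1 a2; rewrite !inE.
move=> /andP[_ /andP[_ s1]] /andP[_ /andP[_ s2]].
have e : (ga a1 - ga a2) * hB = (f - ga a2 * hB) - (f - ga a1 * hB).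
  by rewrite mulrBl; ring.
have sz12 : (size ((ga a1 - ga a2) * hB)%R <= m)%N.
  rewrite e; apply: leq_trans (size_polyD _ _) _; rewrite size_polyN geq_max.
  by rewrite (leq_trans s1) ?(leq_trans s2).
have eg : ga a1 = ga a2.
  apply/eqP; rewrite -subr_eq0; apply/eqP; apply: contraTeq sz12 => nz.
  by rewrite size_Mmonic // sz addnS /= -ltnNge -{1}[m]add0n ltn_add2r lt0n size_poly_eq0.
have ep : \poly_(i < d) a1 0 (inord i) = \poly_(i < d) a2 0 (inord i) :> {poly F}.
  by apply: oppr_inj; apply: (addrI 'X^d); exact: eg.
apply/esym/rowP => i; have := congr1 (fun p : {poly F} => p`_i) ep.
by rewrite /= !coef_poly ltn_ord !inord_val.
Qed.


Lemma coef_s_ga (s : {poly F}) (a : 'rV[F]_d) (k : nat) :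
  (s - ga a)`_k = s`_k - (k == d)%:R + (if (k < d)%N then a 0 (inord k) else 0).
Proof. by rewrite /ga coefB coefB coefXn coef_poly opprD opprK addrA. Qed.

Lemma size_s_ga (s : {poly F}) (a : 'rV[F]_d) (j : nat) :
  size s = d.+1 -> s`_d = 1 -> (0 < j)%N ->
  (size (s - ga a)%R <= j)%N = [forall i : 'I_d, (j <= i)%N ==> (a 0 i == - s`_i)].
Proof.
move=> szs lcs j0; apply/leq_sizeP/forallP.
  move=> H i; apply/implyP => ji; have := H i ji.
  rewrite coef_s_ga ltn_ord (ltn_eqF (ltn_ord i)) subr0 inord_val => /eqP.
  by rewrite addrC addr_eq0.
move=> H k jk; rewrite coef_s_ga.
case: (ltngtP k d) => kd.
- have := H (Ordinal kd); rewrite /= jk /= => /eqP e.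
  have -> : (inord k : 'I_d) = Ordinal kd by apply: val_inj; rewrite /= inordK.
  by rewrite subr0 e addrN.
- by rewrite subr0 nth_default ?szs // addr0.
- by rewrite kd lcs subrr addr0.
Qed.

Lemma Qx_high (hB : {poly F}) : f \is monic -> size f = n.+1 ->
  hB \is monic -> size hB = m.+1 -> hB`_0 != 0 -> (m <= h)%N -> (h.+1 < n)%N ->
  #|[set a : 'rV[F]_d | Qx (ga a * hB)]| = ((#|F| - 1) * #|F| ^ (h - m))%N.
Proof.
move=> monf szf mon sz h0 mh hn.
have hB0 : hB != 0 by apply: monic_neq0.
pose s : {poly F} := f %/ hB; pose t : {poly F} := f %% hB.
have fst : f = s * hB + t by apply: divp_eq.
have szt : (size t <= m)%N by rewrite -ltnS -sz ltn_modpN0.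
have szs : size s = d.+1.
  by rewrite /s size_divp // szf sz /=; lia.
have s0 : s != 0 by rewrite -size_poly_eq0 szs.
have lcs : s`_d = 1.
  have szsh : size (s * hB) = n.+1 by rewrite size_Mmonic // szs sz; lia.
  have : lead_coef (s * hB) = lead_coef s by rewrite lead_coef_Mmonic.
  rewrite !lead_coefE szsh szs /= => <-.
  have : f`_n = 1 by move/monicP: monf; rewrite lead_coefE szf.
  rewrite {1}fst coefD (nth_default 0 (_ : size t <= n)%N) ?addr0 //.
  by apply: leq_trans szt _; lia.
have key : forall g : {poly F},
    (size (f - g * hB)%R <= h.+1)%N = (size (s - g)%R <= h.+1 - m)%N.
  move=> g; have -> : f - g * hB = (s - g) * hB + t by rewrite {1}fst; ring.
  have [->|nz] := eqVneq (s - g) 0.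
    rewrite mul0r add0r size_poly0 leq0n; apply: leq_trans szt _; lia.
  have szm : size ((s - g) * hB) = (size (s - g)%R + m)%N.
    by rewrite size_Mmonic // sz addnS.
  have ps : (0 < size (s - g)%R)%N by rewrite lt0n size_poly_eq0.
  have lt : (size t < size ((s - g) * hB)%R)%N by rewrite szm; lia.
  rewrite [size (_ + t)]size_polyDl // szm.
  by apply/idP/idP => ?; lia.
have -> : [set a : 'rV[F]_d | Qx (ga a * hB)] =
   [set a : 'rV[F]_d | (a 0 0 != 0) &&
      [forall i : 'I_d, (h.+1 - m <= i)%N ==> (a 0 i == - s`_i)]].
  apply/setP => a; rewrite !inE /Qx /Iset coef0M coef0_ga mulf_eq0 oppr_eq0.
  rewrite (negPf h0) orbF monicMl ?ga_monic // mon key size_s_ga //; lia.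
rewrite count_rows; last by apply/andP; split; lia.
by congr (_ * _ ^ _)%N; lia.
Qed.

End PolyCount.

Section Final.
Variable F : finFieldType.

Definition cnt n d (Q : pred {poly F}) :=
  (\sum_(p : 'M[F]_n * 'rV[F]_n | cls d p.1 p.2 && Q (char_poly p.1)) 1)%N.
Definition GLc n := #|[set M : 'M[F]_n | M \in unitmx]|.

Lemma cp0_unit n (M : 'M[F]_n) : ((char_poly M)`_0 != 0) = (M \in unitmx).
Proof.
by rewrite char_poly_det mulf_eq0 signr_eq0 /= unitmxE unitfE.
Qed.

Lemma sum_ab d' m (Q : pred {poly F}) :
  (\sum_(ab : 'rV[F]_d'.+1 * 'M[F]_m) Q (ga ab.1 * char_poly ab.2)%R)%N =
  (\sum_(B : 'M[F]_m) #|[set a : 'rV[F]_d'.+1 | Q (ga a * char_poly B)%R]|)%N.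
Proof.
rewrite -(pair_bigA _ (fun (a : 'rV[F]_d'.+1) (B : 'M[F]_m) => (Q (ga a * char_poly B)%R : nat))) /=.
rewrite exchange_big /=; apply: eq_bigr => B _.
by rewrite cardsE -sum_card.
Qed.

Lemma Qx_nonunit d' m f h (B : 'M[F]_m) : B \notin unitmx ->
  #|[set a : 'rV[F]_d'.+1 | Qx h f (ga a * char_poly B)]| = 0%N.
Proof.
move=> nu; apply/eqP; rewrite cards_eq0; apply/eqP/setP => a; rewrite !inE.
rewrite /Qx coef0M -cp0_unit in nu *; rewrite negbK in nu.
by rewrite (eqP nu) mulr0 eqxx.
Qed.

Lemma cnt_high n d f h : (0 < d <= n)%N -> f \is monic -> size f = n.+1 ->
  (n - d <= h)%N -> (h.+1 < n)%N ->
  cnt n d (Qx h f) = (GLc n * (#|F| - 1) * #|F| ^ (h - (n - d)))%N.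
Proof.
case: d => // d' /andP[_ dn]; have [m ->] : exists m, n = (d'.+1 + m)%N.
  by exists (n - d'.+1)%N; rewrite subnKC.
rewrite addKn => monf szf mh hn.
rewrite /cnt cnt_bij /GLc cardGL_split sum_ab.
transitivity (#|[set K : 'M[F]_(d'.+1, d'.+1 + m) | row_free K]| * #|'M[F]_(m, d'.+1)| *
   \sum_(B : 'M[F]_m) ((B \in unitmx) * ((#|F| - 1) * #|F| ^ (h - m))))%N.
  congr (_ * _)%N; apply: eq_bigr => B _.
  case u: (B \in unitmx); last by rewrite Qx_nonunit ?u.
  rewrite mul1n (@Qx_high _ d' m) // ?char_poly_monic ?size_char_poly //.
  by rewrite cp0_unit.
rewrite -big_distrl /= (sum_card (fun B : 'M[F]_m => B \in unitmx)) !mulnA.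
congr (_ * _ * _ * _)%N; by apply: eq_card => B; rewrite !inE.
Qed.

Lemma cnt_low n d f h : (0 < d <= n)%N -> (h < n - d)%N ->
  (cnt n d (Qx h f) <= GLc n)%N.
Proof.
case: d => // d' /andP[_ dn]; have [m ->] : exists m, n = (d'.+1 + m)%N.
  by exists (n - d'.+1)%N; rewrite subnKC.
rewrite addKn => hm.
rewrite /cnt cnt_bij /GLc cardGL_split sum_ab leq_mul2l; apply/orP; right.
rewrite cardsE -sum_card; apply: leq_sum => B _.
case u: (B \in unitmx); last by rewrite Qx_nonunit ?u.
have u' : unitmx B = true := u; rewrite u'; by apply: (@Qx_low _ d' m) => //; rewrite ?char_poly_monic ?size_char_poly.
Qed.


Lemma geom (q h : nat) : (0 < q)%N ->
  (\sum_(0 <= j < h.+1) (q - 1) * q ^ j + 1 = q ^ h.+1)%N.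
Proof.
move=> q0; elim: h => [|h IH].
  by rewrite big_nat1 expn0 muln1 expn1 subnK.
rewrite big_nat_recr //= addnAC IH.
by rewrite -{1}(mul1n (q ^ h.+1)%N) -mulnDl addnC subnK // expnS.
Qed.

Lemma nonzero_rows n : #|[set v : 'rV[F]_n | v != 0]| = (#|F| ^ n - 1)%N.
Proof.
rewrite cardsE (@eq_card _ _ (predC1 0)) ?cardC1 ?card_mx ?mul1n ?subn1 //.
Qed.

Lemma sum_nonzero n (M : 'M[F]_n) (v : 'rV[F]_n) :
  (\sum_(i < n) (cls i.+1 M v : nat))%N = (v != 0 : nat).
Proof.
have := cls_sum M v; rewrite big_ord_recl cls0.
have -> : (\sum_(i < n) (cls (lift ord0 i) M v : nat) = \sum_(i < n) (cls i.+1 M v : nat))%N by [].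
by case: (v == 0) => /= e; lia.
Qed.


Lemma sum_pairs n h f :
  (\sum_(p : 'M[F]_n * 'rV[F]_n) ((p.2 != 0%R) && Qx h f (char_poly p.1)))%N =
  (#|[set M : 'M[F]_n | (M \in unitmx) && Iset f h (char_poly M)]| * (#|F| ^ n - 1))%N.
Proof.
rewrite -(pair_bigA _ (fun (M : 'M[F]_n) (v : 'rV[F]_n) => ((v != 0%R) && Qx h f (char_poly M) : nat))) /=.
transitivity (\sum_(M : 'M[F]_n) ((M \in unitmx) && Iset f h (char_poly M) : nat) * (#|F| ^ n - 1))%N.
  apply: eq_bigr => M _.
  have -> : (Qx h f (char_poly M)) = (M \in unitmx) && Iset f h (char_poly M).
    by rewrite /Qx cp0_unit.
  case: (_ && _); last by rewrite mul0n big1 // => v _; rewrite andbF.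
  rewrite mul1n -nonzero_rows cardsE -sum_card; apply: eq_bigr => v _.
  by rewrite andbT.
by rewrite -big_distrl /= (sum_card (fun M : 'M[F]_n => (M \in unitmx) && Iset f h (char_poly M))) cardsE.
Qed.

Lemma sum_cnt n h f :
  (\sum_(p : 'M[F]_n * 'rV[F]_n) ((p.2 != 0%R) && Qx h f (char_poly p.1)))%N =
  (\sum_(i < n) cnt n i.+1 (Qx h f))%N.
Proof.
transitivity (\sum_(p : 'M[F]_n * 'rV[F]_n) \sum_(i < n) (cls i.+1 p.1 p.2 && Qx h f (char_poly p.1) : nat))%N.
  apply: eq_bigr => p _.
  have -> : ((p.2 != 0%R) && Qx h f (char_poly p.1) : nat) =
     ((p.2 != 0%R) * Qx h f (char_poly p.1))%N by case: (_ != _); case: (Qx _ _ _).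
  rewrite -(sum_nonzero p.1 p.2) big_distrl /=; apply: eq_bigr => i _.
  by case: (cls _ _ _); case: (Qx _ _ _).
rewrite exchange_big /=; apply: eq_bigr => i _.
by rewrite /cnt [RHS]big_mkcond; apply: eq_bigr => p _; case: (_ && _).
Qed.


Lemma main_count n h f : f \is monic -> size f = n.+1 -> (h.+1 < n)%N ->
  exists2 E,
    (#|[set M : 'M[F]_n | (M \in unitmx) && Iset f h (char_poly M)]| * (#|F| ^ n - 1)
      = E + GLc n * (#|F| ^ h.+1 - 1))%N
    & (E <= (n - h.+1) * GLc n)%N.
Proof.
move=> monf szf hn.
have q1 : (1 < #|F|)%N by apply: card_finNzRing_gt1.
rewrite -sum_pairs sum_cnt.
pose i0 := (n - h.+1)%N.
have i0n : (i0 <= n)%N by rewrite /i0 leq_subr.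
rewrite -(big_mkord xpredT (fun i => cnt n i.+1 (Qx h f))) (big_cat_nat (leq0n i0) i0n) /=.
exists (\sum_(0 <= i < i0) cnt n i.+1 (Qx h f))%N.
  congr addn.
  rewrite -{1}(add0n i0) big_addn.
  have -> : (n - i0 = h.+1)%N by rewrite /i0; lia.
  transitivity (GLc n * \sum_(0 <= j < h.+1) (#|F| - 1) * #|F| ^ j)%N.
    rewrite big_distrr; apply: eq_big_nat => j /andP[_ jh] /=.
    rewrite cnt_high //; last by rewrite /i0; lia.
      rewrite -mulnA; congr (_ * (_ * _ ^ _))%N; rewrite /i0; lia.
    by apply/andP; split => //; rewrite /i0; lia.
  by rewrite -(geom h (ltnW q1)) addnK.
rewrite -[X in (_ <= X * _)%N]subn0 -sum_nat_const_nat.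
rewrite big_nat_cond [X in (_ <= X)%N]big_nat_cond; apply: leq_sum => i /andP[/andP[_ ii0] _].
apply: cnt_low; first by apply/andP; split => //; rewrite /i0 in ii0; lia.
by rewrite /i0 in ii0; lia.
Qed.

End Final.

Unset Implicit Arguments.

Theorem theorem1p8 (F : finFieldType) (n h : nat) (f : {poly F}) :
  (1 <= n)%N -> (h.+1 < n)%N ->
  f \is monic -> size f = n.+1 ->
  `| prob_charpoly_in_I n f h - (#|F| ^ h.+1)%:R / (#|F| ^ n)%:R | <=
    (n - h)%:R / (#|F| ^ n)%:R :> rat.
Proof.
move=> n1 hn monf szf.
have [E eqE leE] := main_count monf szf hn.
rewrite /prob_charpoly_in_I.
move: eqE leE; rewrite /GLc.
set N := #|[set M : 'M[F]_n | (M \in unitmx) && Iset f h (char_poly M)]|.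
set G := #|[set M : 'M[F]_n | M \in unitmx]|.
move=> eqE leE.
have G0 : (0 < G)%N.
  by apply/card_gt0P; exists 1%:M; rewrite inE unitmx1.
have NG : (N <= G)%N.
  by apply: subset_leq_card; apply/subsetP => M; rewrite !inE => /andP[].
have q1 : (1 < #|F|)%N by apply: card_finNzRing_gt1.
have Qp : (0 < #|F| ^ n)%N by rewrite expn_gt0 ltnW.
have Rp : (0 < #|F| ^ h.+1)%N by rewrite expn_gt0 ltnW.
have eqr : (N%:R * ((#|F| ^ n)%:R - 1) =
     E%:R + G%:R * ((#|F| ^ h.+1)%:R - 1) :> rat).
  have := congr1 (fun x => x%:R : rat) eqE.
  by rewrite /= natrD !natrM !natrB.
have -> : (n - h)%N = ((n - h.+1) + 1)%N by lia.
move: eqr leE NG G0 Qp.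
set Nr := (N%:R : rat); set Gr := (G%:R : rat); set Qr := ((#|F| ^ n)%:R : rat).
set Rr := ((#|F| ^ h.+1)%:R : rat); set k := (n - h.+1)%N.
move=> eqr leE NG G0 Qp.
have Gr0 : 0 < Gr by rewrite ltr0n.
have Qr0 : 0 < Qr by rewrite ltr0n.
have NGr : Nr <= Gr by rewrite ler_nat.
have Nr0 : 0 <= Nr by rewrite ler0n.
have Er0 : 0 <= (E%:R : rat) by rewrite ler0n.
have Ek : (E%:R : rat) <= k%:R * Gr by rewrite -natrM ler_nat.
have key : Nr / Gr - Rr / Qr = (E%:R + Nr - Gr) / (Gr * Qr).
  have Ee : (E%:R : rat) = Nr * (Qr - 1) - Gr * (Rr - 1) by rewrite eqr; ring.
  rewrite Ee; field.
  by rewrite (gt_eqF Gr0) (gt_eqF Qr0).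
rewrite key normf_div (ger0_norm (ltW (mulr_gt0 Gr0 Qr0))).
rewrite ler_pdivrMr ?mulr_gt0 //.
have -> : (k + 1)%:R / Qr * (Gr * Qr) = (k%:R + 1) * Gr.
  by rewrite natrD; field; rewrite (gt_eqF Qr0).
rewrite ler_norml; apply/andP; split; nra.
Qed.
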